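(* Let $A$ be a dual Banach algebra. If $A^{**}$, equipped with either the first or the second Arens product, is weakly amenable, then $A$ is weakly amenable.
   Context: A dual Banach algebra is a Banach algebra $A$ which is the dual space of a Banach space $A_*$ (i.e. $A=(A_* )^*$) such that multiplication in $A$ is separately weak$^*$-continuous. Arens products on $A^{**}$: for $a,b\in A$, $f\in A^*$, $F,G\in A^{**}$, $\langle a\cdot f,b\rangle=f(ba)$, $\langle f\cdot a,b\rangle=f(ab)$, $\langle f\cdot F,a\rangle=\langle F,a\cdot f\rangle$, $\langle F\cdot f,a\rangle=\langle F,f\cdot a\rangle$, $\langle F\Box G,f\rangle=\langle F,G\cdot f\rangle$, $\langle F\Diamond G,f\rangle=\langle G,f\cdot F\rangle$. A Banach algebra $C$ is weakly amenable if every bounded derivation $D:C\to C^*$ ($D(ab)=a\cdot D(b)+D(a)\cdot b$) is inner, i.e. $D(a)=a\cdot f-f\cdot a$ for some $f\in C^*$. *)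

(* Defs.v *)
From HB Require Import structures.
From mathcomp Require Import all_boot all_order all_algebra.
From mathcomp Require Import all_classical all_reals all_analysis.
Set Implicit Arguments. Unset Strict Implicit. Unset Printing Implicit Defensive.
Import Order.TTheory GRing.Theory Num.Theory.
Import numFieldNormedType.Exports.
Local Open Scope classical_set_scope.
Local Open Scope ring_scope.

Section BanachDefs.
Variable K : numFieldType.

Definition banach_algebra (A : completeNormedModType K) (mul : A -> A -> A) : Prop :=
  [/\ (forall a b c, mul (mul a b) c = mul a (mul b c)),
      (forall a b c, mul (a + b) c = mul a c + mul b c),
      (forall a b c, mul a (b + c) = mul a b + mul a c),
      (forall (k : K) a b, mul (k *: a) b = k *: mul a b /\ mul a (k *: b) = k *: mul a b)
    & (forall a b, `|mul a b| <= `|a| * `|b|)].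

Definition lin_fun (V : normedModType K) (g : V -> K) : Prop :=
  (forall x y, g (x + y) = g x + g y) /\ (forall (k : K) x, g (k *: x) = k * g x).

Definition bdd_lin (V : normedModType K) (g : V -> K) : Prop :=
  lin_fun g /\ exists M : K, forall x, `|g x| <= M * `|x|.

(** Weak*-continuity of a map T : A -> A, where A is identified with E^*
    through Phi (the weak* topology is the initial topology of the maps
    x |-> Phi x e, e in E; continuity is expressed through filters). *)
Definition weakstar_continuous (E A : normedModType K) (Phi : A -> E -> K)
  (T : A -> A) : Prop :=
  forall (F : set_system A) (a : A), Filter F ->
    (forall e, (fun x => Phi x e) @ F --> Phi a e) ->
    forall e, (fun x => Phi (T x) e) @ F --> Phi (T a) e.

(** A is a dual Banach algebra with predual E: Phi : A -> E^* is an
    isometric linear isomorphism onto the dual of E, and multiplication is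
    separately weak*-continuous. *)
Definition dual_banach_algebra (E A : completeNormedModType K)
  (mul : A -> A -> A) (Phi : A -> E -> K) : Prop :=
  [/\ banach_algebra mul,
      (forall a, lin_fun (Phi a)) /\
      (forall a b e, Phi (a + b) e = Phi a e + Phi b e) /\
      (forall (k : K) a e, Phi (k *: a) e = k * Phi a e),
      (forall a, (forall e, `|Phi a e| <= `|a| * `|e|) /\
                 (forall c : K, (forall e, `|Phi a e| <= c * `|e|) -> `|a| <= c)),
      (forall g : E -> K, bdd_lin g -> exists a, forall e, Phi a e = g e)
    & (forall b, weakstar_continuous Phi (fun a => mul a b) /\
                 weakstar_continuous Phi (fun a => mul b a))].

(** Weak amenability of a Banach algebra presented as a carrier X with a
    membership predicate [mem], an equality [eqv] of elements, a norm-bound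
    relation [nb x c] meaning ||x|| <= c, and operations add, scale, mul.
    A bounded derivation D : C -> C^* is encoded as D x y = <D(x), y>. *)
Definition weakly_amenable (X : Type) (mem : X -> Prop) (eqv : X -> X -> Prop)
  (nb : X -> K -> Prop) (add : X -> X -> X) (scale : K -> X -> X)
  (mul : X -> X -> X) : Prop :=
  forall D : X -> X -> K,
    (forall x x' y y', mem x -> mem x' -> mem y -> mem y' ->
        eqv x x' -> eqv y y' -> D x y = D x' y') ->
    (forall x y z, mem x -> mem y -> mem z ->
        D (add x y) z = D x z + D y z /\ D z (add x y) = D z x + D z y) ->
    (forall (k : K) x y, mem x -> mem y ->
        D (scale k x) y = k * D x y /\ D x (scale k y) = k * D x y) ->
    (exists M : K, forall x y cx cy, mem x -> mem y -> nb x cx -> nb y cy ->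
        `|D x y| <= M * cx * cy) ->
    (forall x y z, mem x -> mem y -> mem z ->
        D (mul x y) z = D y (mul z x) + D x (mul y z)) ->
    exists f : X -> K,
      [/\ (forall x x', mem x -> mem x' -> eqv x x' -> f x = f x'),
          (forall x y, mem x -> mem y -> f (add x y) = f x + f y),
          (forall (k : K) x, mem x -> f (scale k x) = k * f x),
          (exists M : K, forall x c, mem x -> nb x c -> `|f x| <= M * c)
        & (forall x y, mem x -> mem y -> D x y = f (mul y x) - f (mul x y))].

(** The bidual A^** , represented by functionals on (A -> K) restricted to
    the dual A^* (bounded linear functionals on A). *)
Section Bidual.
Variable A : normedModType K.

Definition dual_nb (f : A -> K) (d : K) : Prop := forall a, `|f a| <= d * `|a|.

Definition bidual_nb (F : (A -> K) -> K) (c : K) : Prop :=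
  forall f d, bdd_lin f -> dual_nb f d -> `|F f| <= c * d.

Definition bidual_mem (F : (A -> K) -> K) : Prop :=
  [/\ (forall f g, bdd_lin f -> bdd_lin g -> F (fun a => f a + g a) = F f + F g),
      (forall (k : K) f, bdd_lin f -> F (fun a => k * f a) = k * F f)
    & exists M : K, bidual_nb F M].

Definition bidual_eqv (F G : (A -> K) -> K) : Prop :=
  forall f, bdd_lin f -> F f = G f.

Definition bidual_add (F G : (A -> K) -> K) : (A -> K) -> K := fun f => F f + G f.
Definition bidual_scale (k : K) (F : (A -> K) -> K) : (A -> K) -> K := fun f => k * F f.

Variable mul : A -> A -> A.
(** first Arens product: <F □ G, f> = <F, G.f>, <G.f, a> = <G, f.a>,
    <f.a, b> = f(ab) *)
Definition arens1 (F G : (A -> K) -> K) : (A -> K) -> K :=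
  fun f => F (fun a => G (fun b => f (mul a b))).
(** second Arens product: <F ◇ G, f> = <G, f.F>, <f.F, a> = <F, a.f>,
    <a.f, b> = f(ba) *)
Definition arens2 (F G : (A -> K) -> K) : (A -> K) -> K :=
  fun f => G (fun a => F (fun b => f (mul b a))).
End Bidual.

End BanachDefs.

(* Main.v *)
Require Import Defs.
From HB Require Import structures.
From mathcomp Require Import all_boot all_order all_algebra.
From mathcomp Require Import all_classical all_reals all_analysis.
From mathcomp Require Import ring.
Import Order.TTheory GRing.Theory Num.Theory.
Import numFieldNormedType.Exports.
Local Open Scope ring_scope.
Set Implicit Arguments.

Section Proof.
Variables (K : numFieldType) (E A : completeNormedModType K)
  (mul : A -> A -> A) (Phi : A -> E -> K).
Hypothesis HD : dual_banach_algebra mul Phi.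

Lemma PhiD a b e : Phi (a + b) e = Phi a e + Phi b e.
Proof. by case: HD => _ [_ [H _]] _ _ _; apply: H. Qed.
Lemma PhiZ k a e : Phi (k *: a) e = k * Phi a e.
Proof. by case: HD => _ [_ [_ H]] _ _ _; apply: H. Qed.
Lemma PhieD a e1 e2 : Phi a (e1 + e2) = Phi a e1 + Phi a e2.
Proof. by case: HD => _ [H _] _ _ _; apply: (H a).1. Qed.
Lemma PhieZ a k e : Phi a (k *: e) = k * Phi a e.
Proof. by case: HD => _ [H _] _ _ _; apply: (H a).2. Qed.
Lemma Phi0 e : Phi 0 e = 0.
Proof. by have := PhiZ 0 0 e; rewrite scale0r mul0r. Qed.
Lemma Phie0 a : Phi a 0 = 0.
Proof. by have := PhieZ a 0 0; rewrite scale0r mul0r. Qed.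
Lemma PhiN a b e : Phi (a - b) e = Phi a e - Phi b e.
Proof. by rewrite -scaleN1r PhiD PhiZ mulN1r. Qed.
Lemma Phi_bnd a e : `|Phi a e| <= `|a| * `|e|.
Proof. by case: HD => _ _ H _ _; apply: (H a).1. Qed.
Lemma Phi_iso a c : (forall e, `|Phi a e| <= c * `|e|) -> `|a| <= c.
Proof. by case: HD => _ _ H _ _; apply: (H a).2. Qed.
Lemma Phi_surj (g : E -> K) : bdd_lin g -> exists a, forall e, Phi a e = g e.
Proof. by case: HD => _ _ _ H _; apply: H. Qed.
Lemma Phi_inj a b : (forall e, Phi a e = Phi b e) -> a = b.
Proof.
move=> H; apply/eqP; rewrite -subr_eq0 -normr_eq0 eq_le normr_ge0 andbT.
by apply: Phi_iso => e; rewrite PhiN H subrr normr0 mul0r.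
Qed.

Lemma mulDr a b c : mul a (b + c) = mul a b + mul a c.
Proof. by case: HD => [[_ _ H _ _]] _ _ _ _; apply: H. Qed.
Lemma mulDl a b c : mul (a + b) c = mul a c + mul b c.
Proof. by case: HD => [[_ H _ _ _]] _ _ _ _; apply: H. Qed.
Lemma mulZl k a b : mul (k *: a) b = k *: mul a b.
Proof. by case: HD => [[_ _ _ H _]] _ _ _ _; apply: (H k a b).1. Qed.
Lemma mulZr k a b : mul a (k *: b) = k *: mul a b.
Proof. by case: HD => [[_ _ _ H _]] _ _ _ _; apply: (H k a b).2. Qed.
Lemma mul0 a : mul a 0 = 0.
Proof. by have := mulZr 0 a 0; rewrite !scale0r. Qed.
Lemma mul0' a : mul 0 a = 0.
Proof. by have := mulZl 0 0 a; rewrite !scale0r. Qed.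

Lemma kerlem (phi : A -> K) (phiD : forall x y, phi (x + y) = phi x + phi y)
  (phiZ : forall k x, phi (k *: x) = k * phi x) :
  forall (s pre : seq E),
  (forall b, (forall e, e \in pre ++ s -> Phi b e = 0) -> phi b = 0) ->
  exists e', forall b, (forall e, e \in pre -> Phi b e = 0) -> phi b = Phi b e'.
Proof.
elim=> [|e0 s IH] pre H.
  by exists 0 => b Hb; rewrite Phie0; apply: H; rewrite cats0.
case: (pselect (exists b0, (forall e, e \in pre -> Phi b0 e = 0) /\ Phi b0 e0 != 0)).
  case=> b0 [Hb0 Hne].
  have H' : forall b, (forall e, e \in (e0 :: pre) ++ s -> Phi b e = 0) -> phi b = 0.
    move=> b Hb; apply: H => e He; apply: Hb.
    move: He; rewrite !mem_cat !in_cons.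
    by case: (e == e0); case: (e \in pre); case: (e \in s).
  have [e'' He''] := IH (e0 :: pre) H'.
  exists (e'' + ((phi b0 - Phi b0 e'') / Phi b0 e0) *: e0) => b Hb.
  set t := Phi b e0 / Phi b0 e0.
  have Hb' : forall e, e \in e0 :: pre -> Phi (b - t *: b0) e = 0.
    move=> e; rewrite in_cons => /orP[/eqP->|He].
      by rewrite PhiN PhiZ /t divfK // subrr.
    by rewrite PhiN PhiZ Hb // Hb0 // mulr0 subrr.
  have := He'' _ Hb'.
  rewrite -scaleNr phiD phiZ PhiD PhiZ PhieD PhieZ => Hx.
  have -> : (phi b0 - Phi b0 e'') / Phi b0 e0 * Phi b e0
            = t * (phi b0 - Phi b0 e'').
    by rewrite /t; ring.
  have -> : phi b = phi b + - t * phi b0 + t * phi b0 by ring.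
  rewrite Hx; ring.
move=> Hn.
have H' : forall b, (forall e, e \in pre ++ s -> Phi b e = 0) -> phi b = 0.
  move=> b Hb; apply: H => e; rewrite mem_cat in_cons.
  case/orP=> [He|/orP[/eqP->|He]].
  - by apply: Hb; rewrite mem_cat He.
  - apply/eqP/negPn/negP => hne; apply: Hn; exists b; split => // e1 He1.
    by apply: Hb; rewrite mem_cat He1.
  - by apply: Hb; rewrite mem_cat He orbT.
have [e' He'] := IH pre H'.
by exists e'.
Qed.

Lemma wcont_ker (T : A -> A) e : weakstar_continuous Phi T -> T 0 = 0 ->
  (forall k b, Phi (T (k *: b)) e = k * Phi (T b) e) ->
  exists s : seq E, forall b, (forall e', e' \in s -> Phi b e' = 0) -> Phi (T b) e = 0.
Proof.
move=> HT T0 TZ.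
pose F : set_system A := fun S => exists (s : seq E),
  (forall b, (forall e', e' \in s -> `|Phi b e'| < 1) -> S b).
have FF : Filter F.
  split.
  - by exists [::].
  - move=> P Q [s1 H1] [s2 H2].
    exists (s1 ++ s2) => b Hb; split.
      by apply: H1 => e' He'; apply: Hb; rewrite mem_cat He'.
    by apply: H2 => e' He'; apply: Hb; rewrite mem_cat He' orbT.
  - move=> P Q PQ [s H]; exists s => b Hb.
    by apply: PQ; apply: H.
have := HT F 0 FF.
have Hc : forall e', ((fun x => Phi x e') @ F --> Phi 0 e')%classic.
  move=> e'; apply/cvgrPdist_lt => eps epsp.
  exists [:: eps^-1 *: e'] => b Hb.
  rewrite Phi0 sub0r normrN.
  have := Hb (eps^-1 *: e'); rewrite mem_seq1 eqxx PhieZ normrM => /(_ isT).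
  by rewrite gtr0_norm ?invr_gt0 // mulrC ltr_pdivrMr // mul1r.
move=> /(_ Hc e) /cvgrPdist_lt /(_ 1 ltr01) [s H].
exists s => b Hb; apply/eqP/negPn/negP => hne.
have H2 : `|(2:K)| < 1.
  have := H ((2 / Phi (T b) e) *: b).
  rewrite T0 Phi0 sub0r normrN TZ divfK //; apply => e' He'.
  by rewrite PhiZ Hb // mulr0 normr0.
by move: H2; rewrite normr_nat lt_gtF // ltr1n.
Qed.

Lemma rep_gen (T : A -> A) e : weakstar_continuous Phi T -> T 0 = 0 ->
  (forall x y, T (x + y) = T x + T y) -> (forall k x, T (k *: x) = k *: T x) ->
  exists e', forall b, Phi (T b) e = Phi b e'.
Proof.
move=> HT T0 TD TZ.
have TZ' : forall k b, Phi (T (k *: b)) e = k * Phi (T b) e by move=> k b; rewrite TZ PhiZ.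
have [s Hs] := wcont_ker HT T0 TZ'.
have TD' : forall x y, Phi (T (x + y)) e = Phi (T x) e + Phi (T y) e.
  by move=> x y; rewrite TD PhiD.
have [e' He'] := @kerlem (fun b => Phi (T b) e) TD' TZ' s [::] Hs.
by exists e' => b; apply: He'.
Qed.

Lemma rep_left a e : exists e', forall b, Phi (mul a b) e = Phi b e'.
Proof.
apply: rep_gen.
- by case: HD => _ _ _ _ /(_ a) [].
- exact: mul0.
- by move=> x y; apply: mulDr.
- by move=> k x; apply: mulZr.
Qed.

Lemma rep_right a e : exists e', forall b, Phi (mul b a) e = Phi b e'.
Proof.
apply: (@rep_gen (fun b => mul b a)).
- by case: HD => _ _ _ _ /(_ a) [].
- exact: mul0'.
- by move=> x y; apply: mulDl.
- by move=> k x; apply: mulZl.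
Qed.

Definition evl (e : E) : A -> K := fun a => Phi a e.
Definition iota (a : A) : (A -> K) -> K := fun g => g a.

Lemma evl_bdd e : bdd_lin (evl e).
Proof.
split; first by split => [x y|k x]; rewrite /evl ?PhiD ?PhiZ.
by exists `|e| => x; rewrite mulrC; apply: Phi_bnd.
Qed.

Lemma evl_nb e : dual_nb (evl e) `|e|.
Proof. by move=> x; rewrite mulrC; apply: Phi_bnd. Qed.

Lemma spec_ex (F : (A -> K) -> K) : bidual_mem F -> exists a, forall e, Phi a e = F (evl e).
Proof.
case=> HFadd HFsc [M HM]; apply: Phi_surj; split; first split.
- move=> x y; have -> : evl (x + y) = (fun a => evl x a + evl y a).
    by apply: funext => a; rewrite /evl PhieD.
  by apply: HFadd; apply: evl_bdd.
- move=> k x; have -> : evl (k *: x) = (fun a => k * evl x a).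
    by apply: funext => a; rewrite /evl PhieZ.
  by apply: HFsc; apply: evl_bdd.
- by exists M => x; apply: HM; [apply: evl_bdd | apply: evl_nb].
Qed.

Definition P (F : (A -> K) -> K) : A := xget 0 [set a | forall e, Phi a e = F (evl e)].

Lemma P_spec (F : (A -> K) -> K) : bidual_mem F -> forall e, Phi (P F) e = F (evl e).
Proof. by move=> HF; have := xgetPex 0 (spec_ex HF); rewrite /P. Qed.

Lemma P_uniq (F : (A -> K) -> K) a : (forall e, Phi a e = F (evl e)) -> P F = a.
Proof.
move=> Ha; apply: Phi_inj => e.
have := xgetPex 0 (ex_intro (fun a => forall e, Phi a e = F (evl e)) a Ha).
by move=> /(_ e) ->; rewrite Ha.
Qed.

Lemma P_iota a : P (iota a) = a.
Proof. by apply: P_uniq. Qed.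

Lemma mem_add (F G : (A -> K) -> K) : bidual_mem F -> bidual_mem G -> bidual_mem (bidual_add F G).
Proof.
case=> F1 F2 [M1 HM1] [G1 G2 [M2 HM2]]; split.
- by move=> f g hf hg; rewrite /bidual_add F1 // G1 // addrACA.
- by move=> k f hf; rewrite /bidual_add F2 // G2 // mulrDr.
- exists (M1 + M2) => f d hf hd; rewrite /bidual_add mulrDl.
  apply: le_trans (ler_normD _ _) _; apply: lerD; [exact: HM1 | exact: HM2].
Qed.

Lemma mem_scale (k : K) (F : (A -> K) -> K) : bidual_mem F -> bidual_mem (bidual_scale k F).
Proof.
case=> F1 F2 [M HM]; split.
- by move=> f g hf hg; rewrite /bidual_scale F1 // mulrDr.
- by move=> c f hf; rewrite /bidual_scale F2 // mulrCA.
- exists (`|k| * M) => f d hf hd; rewrite /bidual_scale normrM -mulrA.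
  by apply: ler_wpM2l => //; apply: HM.
Qed.

Lemma mem_iota a : bidual_mem (iota a).
Proof.
split.
- by move=> f g hf hg.
- by move=> k f hf.
- by exists `|a| => f d hf hd; rewrite /iota mulrC; apply: hd.
Qed.

Lemma P_add (F G : (A -> K) -> K) : bidual_mem F -> bidual_mem G -> P (bidual_add F G) = P F + P G.
Proof. by move=> hF hG; apply: P_uniq => e; rewrite PhiD !P_spec. Qed.

Lemma P_scale (k : K) (F : (A -> K) -> K) : bidual_mem F -> P (bidual_scale k F) = k *: P F.
Proof. by move=> hF; apply: P_uniq => e; rewrite PhiZ !P_spec. Qed.

Lemma P_norm (F : (A -> K) -> K) (c : K) : bidual_mem F -> bidual_nb F c -> `|P F| <= c.
Proof.
move=> hF hc; apply: Phi_iso => e; rewrite P_spec //.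
by apply: hc; [apply: evl_bdd | apply: evl_nb].
Qed.

Lemma main_gen (prod : ((A -> K) -> K) -> ((A -> K) -> K) -> (A -> K) -> K) :
  (forall F G, bidual_mem F -> bidual_mem G ->
     forall e, prod F G (evl e) = Phi (mul (P F) (P G)) e) ->
  (forall a b, prod (iota a) (iota b) = iota (mul a b)) ->
  weakly_amenable (@bidual_mem K A) (@bidual_eqv K A) (@bidual_nb K A)
      (@bidual_add K A) (@bidual_scale K A) prod ->
  weakly_amenable (fun _ : A => True) (@eq A) (fun (a : A) (c : K) => `|a| <= c)
    (fun a b => a + b) (fun k a => k *: a) mul.
Proof.
move=> Hprod Hiota WA D Deq Dadd Dsc [M DM] Dder.
have PP : forall F G, bidual_mem F -> bidual_mem G -> P (prod F G) = mul (P F) (P G).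
  by move=> F G hF hG; apply: P_uniq => e; rewrite Hprod.
have := WA (fun F G => D (P F) (P G)).
case.
- move=> x x' y y' hx hx' hy hy' exx eyy.
  have -> : P x = P x'.
    by apply: P_uniq => e; rewrite P_spec // exx //; apply: evl_bdd.
  have -> : P y = P y' by apply: P_uniq => e; rewrite P_spec // eyy //; apply: evl_bdd.
  by [].
- by move=> x y z hx hy hz; rewrite !P_add //; exact: Dadd.
- by move=> k x y hx hy; rewrite !P_scale //; exact: Dsc.
- exists M => x y cx cy hx hy nx ny; apply: DM => //; exact: P_norm.
- by move=> x y z hx hy hz; rewrite !PP //; apply: Dder.
move=> f [feq fadd fsc [Mf HMf] fder].
have f0 : f (iota 0) = 0.
  have -> : f (iota 0) = f (bidual_scale 0 (iota 0)).
    apply: feq; [exact: mem_iota | exact: mem_scale (mem_iota 0) |].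
    move=> g hg; rewrite /bidual_scale /iota mul0r.
    by have := hg.1.2 0 0; rewrite scale0r mul0r.
  by rewrite fsc ?mul0r //; exact: mem_iota.
exists (fun a => f (iota a)); split.
- by move=> x x' _ _ ->.
- move=> x y _ _; rewrite -fadd; try exact: mem_iota.
  apply: feq; [exact: mem_iota | exact: mem_add (mem_iota x) (mem_iota y) |].
  by move=> g hg; rewrite /bidual_add /iota; apply: hg.1.1.
- move=> k x _; rewrite -fsc; try exact: mem_iota.
  apply: feq; [exact: mem_iota | exact: mem_scale (mem_iota x) |].
  by move=> g hg; rewrite /bidual_scale /iota; apply: hg.1.2.
- exists (if 0 <= Mf then Mf else 0) => x c _ hxc.
  move: hxc; case: (eqVneq x 0) => [-> hxc|hx0 hxc].
    rewrite f0 normr0; have c0 : 0 <= c by move: hxc; rewrite normr0.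
    by case: ifP => h; rewrite ?mul0r // mulr_ge0.
  have xp : 0 < `|x| by rewrite normr_gt0.
  have cp : 0 < c by apply: lt_le_trans hxc.
  have Hf : `|f (iota x)| <= Mf * c.
    apply: HMf; first exact: mem_iota.
    move=> g d hg hd; rewrite /iota.
    have dp : 0 <= d.
      have := hd x; rewrite -(pmulr_lge0 _ xp) => h.
      exact: le_trans (normr_ge0 _) h.
    by apply: le_trans (hd x) _; rewrite mulrC; apply: ler_wpM2r.
  have : 0 <= Mf by rewrite -(pmulr_lge0 _ cp); exact: le_trans (normr_ge0 _) Hf.
  by move=> ->.
- move=> a b _ _; have := fder (iota a) (iota b) (mem_iota a) (mem_iota b).
  by rewrite /= !Hiota !P_iota.
Qed.
End Proof.
Unset Implicit Arguments.


Theorem corollary6p9 (K : numFieldType) (E A : completeNormedModType K)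
  (mul : A -> A -> A) (Phi : A -> E -> K) :
  dual_banach_algebra mul Phi ->
  (weakly_amenable (@bidual_mem K A) (@bidual_eqv K A) (@bidual_nb K A)
      (@bidual_add K A) (@bidual_scale K A) (arens1 mul) \/
   weakly_amenable (@bidual_mem K A) (@bidual_eqv K A) (@bidual_nb K A)
      (@bidual_add K A) (@bidual_scale K A) (arens2 mul)) ->
  weakly_amenable (fun _ : A => True) (@eq A) (fun (a : A) (c : K) => `|a| <= c)
    (fun a b => a + b) (fun k a => k *: a) mul.
Proof.
move=> HD [W|W].
- apply: (main_gen HD _ _ W) => // F G hF hG e.
  rewrite /arens1.
  have -> : (fun a => G (fun b => evl _ _ Phi e (mul a b))) = (fun a => Phi (mul a (P _ _ Phi G)) e).
    apply: funext => a; have [e1 He1] := rep_left HD a e.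
    have -> : (fun b => evl _ _ Phi e (mul a b)) = evl _ _ Phi e1 by apply: funext => b; rewrite /evl He1.
    by rewrite He1 (P_spec HD).
  have [e2 He2] := rep_right HD (P _ _ Phi G) e.
  have -> : (fun a => Phi (mul a (P _ _ Phi G)) e) = evl _ _ Phi e2 by apply: funext => b; rewrite /evl He2.
  by rewrite -(P_spec HD) // He2.
- apply: (main_gen HD _ _ W) => // F G hF hG e.
  rewrite /arens2.
  have -> : (fun a => F (fun b => evl _ _ Phi e (mul b a))) = (fun a => Phi (mul (P _ _ Phi F) a) e).
    apply: funext => a; have [e1 He1] := rep_right HD a e.
    have -> : (fun b => evl _ _ Phi e (mul b a)) = evl _ _ Phi e1 by apply: funext => b; rewrite /evl He1.
    by rewrite He1 (P_spec HD).
  have [e2 He2] := rep_left HD (P _ _ Phi F) e.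
  have -> : (fun a => Phi (mul (P _ _ Phi F) a) e) = evl _ _ Phi e2 by apply: funext => b; rewrite /evl He2.
  by rewrite -(P_spec HD) // He2.
Qed.
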